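(* Let $d>0$, $a\geq 7$ be integers with $\gcd(a,d)=1$, write $a=6m+q$ with $0\leq q\leq 5$, and let $\mathfrak{p}_4\subset A=k[x_1,x_2,x_3,x_4]$ be the kernel of the $k$-algebra map $A\to k[t]$, $x_1\mapsto t^{a}$, $x_2\mapsto t^{2a+d}$, $x_3\mapsto t^{3a+3d}$, $x_4\mapsto t^{4a+6d}$ ($k$ a field). Then $\mathfrak{p}_4$ is minimally generated by the set $H_q$, where: $H_0=\{x_3^2-x_1^2x_4,\ x_2^3-x_1^3x_3,\ x_1^{4m+d}-x_4^{m}\}$; $H_1=\{x_3^2-x_1^2x_4,\ x_2^3-x_1^3x_3,\ x_1^{7}-x_2x_4,\ x_1^{4}x_2^{2}-x_3x_4,\ x_1^{2}x_2^{2}x_3-x_4^{2}\}$ if $m=d=1$, and otherwise $H_1=\{x_3^2-x_1^2x_4,\ x_2^3-x_1^3x_3,\ x_1^{4m+d-6}x_2^{5}-x_4^{m+1},\ x_1^{4m+d-1}x_2^{2}-x_3x_4^{m},\ x_1^{4m+d+2}-x_2x_4^{m}\}$; $H_2=\{x_3^2-x_1^2x_4,\ x_2^3-x_1^3x_3,\ x_1^{4m+d-4}x_2^{4}-x_4^{m+1},\ x_1^{4m+d+1}x_2-x_3x_4^{m},\ x_1^{4m+d+4}-x_2^{2}x_4^{m}\}$; $H_3=\{x_3^2-x_1^2x_4,\ x_2^3-x_1^3x_3,\ x_1^{4m+d-2}x_2^{3}-x_4^{m+1},\ x_1^{4m+d+3}-x_3x_4^{m}\}$; $H_4=\{x_3^2-x_1^2x_4,\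 x_2^3-x_1^3x_3,\ x_1^{4m+d}x_2^{2}-x_4^{m+1},\ x_1^{4m+d+5}-x_2x_3x_4^{m}\}$; $H_5=\{x_3^2-x_1^2x_4,\ x_2^3-x_1^3x_3,\ x_1^{4m+d+2}x_2-x_4^{m+1},\ x_1^{4m+d+7}-x_2^{2}x_3x_4^{m}\}$. *)

(* Defs.v *)
From mathcomp Require Import all_boot all_algebra.
From mathcomp Require Import mpoly.
Set Implicit Arguments. Unset Strict Implicit. Unset Printing Implicit Defensive.
Import GRing.Theory.
Local Open Scope ring_scope.

(* Variables x_1, x_2, x_3, x_4 are 'X_0, 'X_1, 'X_2, 'X_3 (0-based indices). *)
Definition x1 (k : fieldType) : {mpoly k[4]} := 'X_(inord 0).
Definition x2 (k : fieldType) : {mpoly k[4]} := 'X_(inord 1).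
Definition x3 (k : fieldType) : {mpoly k[4]} := 'X_(inord 2).
Definition x4 (k : fieldType) : {mpoly k[4]} := 'X_(inord 3).

Definition curve_exp (a d : nat) (i : 'I_4) : nat :=
  match val i with
  | 0 => a | 1 => 2 * a + d | 2 => 3 * a + 3 * d | _ => 4 * a + 6 * d
  end.

Definition curve_map (k : fieldType) (a d : nat) (p : {mpoly k[4]}) : {poly k} :=
  mmap (@polyC k) (fun i => 'X^(curve_exp a d i)) p.

Definition p4 (k : fieldType) (a d : nat) (p : {mpoly k[4]}) : Prop :=
  curve_map a d p = 0.

Definition in_ideal (k : fieldType) (hs : seq {mpoly k[4]}) (p : {mpoly k[4]}) : Prop :=
  exists cs : seq {mpoly k[4]}, size cs = size hs /\
    p = \sum_(i < size hs) cs`_i * hs`_i.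

Definition generates (k : fieldType) (hs : seq {mpoly k[4]})
  (I : {mpoly k[4]} -> Prop) : Prop :=
  forall p, in_ideal hs p <-> I p.

(* hs minimally generates I: hs generates I and no proper subfamily does
   (by monotonicity of generated ideals it suffices to drop one element). *)
Definition minimally_generates (k : fieldType) (hs : seq {mpoly k[4]})
  (I : {mpoly k[4]} -> Prop) : Prop :=
  generates hs I /\
  forall i : nat, (i < size hs)%N -> ~ generates (take i hs ++ drop i.+1 hs) I.

Definition H (k : fieldType) (m d q : nat) : seq {mpoly k[4]} :=
  let X1 := x1 k in let X2 := x2 k in let X3 := x3 k in let X4 := x4 k in
  let g1 := X3 ^+ 2 - X1 ^+ 2 * X4 in
  let g2 := X2 ^+ 3 - X1 ^+ 3 * X3 in
  match q with
  | 0 => [:: g1; g2; X1 ^+ (4 * m + d) - X4 ^+ m]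
  | 1 => if (m == 1%N) && (d == 1%N) then
           [:: g1; g2; X1 ^+ 7 - X2 * X4; X1 ^+ 4 * X2 ^+ 2 - X3 * X4;
               X1 ^+ 2 * X2 ^+ 2 * X3 - X4 ^+ 2]
         else
           [:: g1; g2; X1 ^+ (4 * m + d - 6) * X2 ^+ 5 - X4 ^+ m.+1;
               X1 ^+ (4 * m + d - 1) * X2 ^+ 2 - X3 * X4 ^+ m;
               X1 ^+ (4 * m + d + 2) - X2 * X4 ^+ m]
  | 2 => [:: g1; g2; X1 ^+ (4 * m + d - 4) * X2 ^+ 4 - X4 ^+ m.+1;
             X1 ^+ (4 * m + d + 1) * X2 - X3 * X4 ^+ m;
             X1 ^+ (4 * m + d + 4) - X2 ^+ 2 * X4 ^+ m]
  | 3 => [:: g1; g2; X1 ^+ (4 * m + d - 2) * X2 ^+ 3 - X4 ^+ m.+1;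
             X1 ^+ (4 * m + d + 3) - X3 * X4 ^+ m]
  | 4 => [:: g1; g2; X1 ^+ (4 * m + d) * X2 ^+ 2 - X4 ^+ m.+1;
             X1 ^+ (4 * m + d + 5) - X2 * X3 * X4 ^+ m]
  | _ => [:: g1; g2; X1 ^+ (4 * m + d + 2) * X2 - X4 ^+ m.+1;
             X1 ^+ (4 * m + d + 7) - X2 ^+ 2 * X3 * X4 ^+ m]
  end.

(* Main.v *)
Require Import Defs.
From mathcomp Require Import all_boot all_algebra.
From mathcomp Require Import mpoly.
From mathcomp Require Import ring lra zify.
Set Implicit Arguments. Unset Strict Implicit. Unset Printing Implicit Defensive.
Import GRing.Theory.
Local Open Scope ring_scope.

Section S.
Variable k : fieldType.
Variables a d : nat.

Definition P (e f g h : nat) : {mpoly k[4]} :=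
  x1 k ^+ e * x2 k ^+ f * x3 k ^+ g * x4 k ^+ h.

Definition degf (e f g h : nat) : nat :=
  (e * a + f * (2 * a + d) + g * (3 * a + 3 * d) + h * (4 * a + 6 * d))%N.

Lemma PM e f g h e' f' g' h' :
  P e f g h * P e' f' g' h' = P (e+e') (f+f') (g+g') (h+h').
Proof. rewrite /P !exprD. ring. Qed.

Lemma cmX (i : 'I_4) : @curve_map k a d ('X_i) = 'X^(curve_exp a d i).
Proof. by rewrite /curve_map mmapX mmap1U. Qed.

Lemma vi (i : nat) : (i < 4)%N -> \val (inord i : 'I_4) = i.
Proof. exact: inordK. Qed.

Lemma cmM p q : @curve_map k a d (p * q) = curve_map a d p * curve_map a d q.
Proof. exact: rmorphM. Qed.
Lemma cmB p q : @curve_map k a d (p - q) = curve_map a d p - curve_map a d q.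
Proof. exact: rmorphB. Qed.
Lemma cmXn p n : @curve_map k a d (p ^+ n) = curve_map a d p ^+ n.
Proof. exact: rmorphXn. Qed.

Lemma cmP e f g h : @curve_map k a d (P e f g h) = 'X^(degf e f g h).
Proof.
rewrite /P !cmM !cmXn /x1 /x2 /x3 /x4 !cmX /curve_exp !vi //.
rewrite -!exprM -!exprD /degf; congr (_ ^+ _); lia.
Qed.

Lemma degfD e f g h e' f' g' h' :
  degf (e+e') (f+f') (g+g') (h+h') = (degf e f g h + degf e' f' g' h')%N.
Proof. rewrite /degf; lia. Qed.

Section Ideal.
Variable hs : seq {mpoly k[4]}.
Local Notation I := (in_ideal hs).

Lemma I0 : I 0.
Proof.
exists (nseq (size hs) 0); rewrite size_nseq; split => //.
by rewrite big1 // => i _; rewrite nth_nseq ltn_ord mul0r.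
Qed.

Lemma ID p q : I p -> I q -> I (p + q).
Proof.
move=> [c1 [s1 ->]] [c2 [s2 ->]].
exists (mkseq (fun i => c1`_i + c2`_i) (size hs)); rewrite size_mkseq; split => //.
rewrite -big_split /=; apply: eq_bigr => i _.
by rewrite nth_mkseq ?ltn_ord // mulrDl.
Qed.

Lemma IM r p : I p -> I (r * p).
Proof.
move=> [c1 [s1 ->]].
exists (mkseq (fun i => r * c1`_i) (size hs)); rewrite size_mkseq; split => //.
rewrite mulr_sumr; apply: eq_bigr => i _.
by rewrite nth_mkseq ?ltn_ord // mulrA.
Qed.

Lemma IN p : I p -> I (- p).
Proof. by move=> Ip; rewrite -mulN1r; apply: IM. Qed.

Lemma IB p q : I p -> I q -> I (p - q).
Proof. by move=> Ip Iq; apply: ID => //; apply: IN. Qed.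

Lemma IZ c p : I p -> I (c *: p).
Proof. by move=> Ip; rewrite -mul_mpolyC; apply: IM. Qed.

Lemma Igen j : (j < size hs)%N -> I hs`_j.
Proof.
move=> lj.
exists (mkseq (fun i => ((i == j)%:R : {mpoly k[4]})) (size hs)); rewrite size_mkseq; split => //.
rewrite (bigD1 (Ordinal lj)) //= nth_mkseq // eqxx mul1r big1 ?addr0 // => i.
by rewrite nth_mkseq ?ltn_ord // -val_eqE /= => /negbTE ->; rewrite mul0r.
Qed.

Lemma I_kernel p : (forall j, (j < size hs)%N -> curve_map a d hs`_j = 0) ->
  I p -> curve_map a d p = 0.
Proof.
move=> hk [c [_ ->]].
rewrite /curve_map rmorph_sum /= big1 // => i _.
by rewrite rmorphM /= [X in _ * X = _]hk ?mulr0.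
Qed.

Lemma Imove e f g h e0 f0 g0 h0 e1 f1 g1 h1 :
  I (P e0 f0 g0 h0 - P e1 f1 g1 h1) ->
  I (P (e+e0) (f+f0) (g+g0) (h+h0) - P (e+e1) (f+f1) (g+g1) (h+h1)).
Proof. by move=> Ih; rewrite -!PM -mulrBr; apply: IM. Qed.

End Ideal.

Definition stdf (f g h : nat) : bool := [&& (f <= 2)%N, (g <= 1)%N & (f + 3 * g + 6 * h < a)%N].
Definition W (f g h : nat) : nat := (3 * f + 7 * g + 13 * h)%N.

Section Reduce.
Variable hs : seq {mpoly k[4]}.
Local Notation I := (in_ideal hs).
Hypothesis a_gt0 : (0 < a)%N.
Hypothesis R1 : I (P 0 3 0 0 - P 3 0 1 0).
Hypothesis R2 : I (P 0 0 2 0 - P 2 0 0 1).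
Hypothesis R3 : forall f g h, (f <= 2)%N -> (g <= 1)%N -> (a <= f + 3 * g + 6 * h)%N ->
  exists wf wg wh f0 g0 h0 e1 f1 g1 h1,
    [/\ f = (wf + f0)%N, g = (wg + g0)%N, h = (wh + h0)%N &
      [/\ degf 0 f0 g0 h0 = degf e1 f1 g1 h1,
        (W f1 g1 h1 < W f0 g0 h0)%N & I (P 0 f0 g0 h0 - P e1 f1 g1 h1)]].

Lemma step e f g h : ~~ stdf f g h ->
  exists e2 f2 g2 h2, [/\ degf e f g h = degf e2 f2 g2 h2, (W f2 g2 h2 < W f g h)%N
     & I (P e f g h - P e2 f2 g2 h2)].
Proof.
move=> ns.
case: (leqP 3 f) => [f3|f2].
  have [f' ->] : exists f', f = (f' + 3)%N by exists (f - 3)%N; rewrite subnK.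
  exists (e + 3)%N, f', (g + 1)%N, h; split.
  - rewrite /degf; lia.
  - rewrite /W; lia.
  - by have := Imove e f' g h R1; rewrite !addn0.
case: (leqP 2 g) => [g2|g1].
  have [g' ->] : exists g', g = (g' + 2)%N by exists (g - 2)%N; rewrite subnK.
  exists (e + 2)%N, f, g', (h + 1)%N; split.
  - rewrite /degf; lia.
  - rewrite /W; lia.
  - by have := Imove e f g' h R2; rewrite !addn0.
have hN : (a <= f + 3 * g + 6 * h)%N.
  by move: ns; rewrite /stdf -ltnS f2 -ltnS g1 /= -leqNgt.
have [wf [wg [wh [f0 [g0 [h0 [e1 [f1 [g1' [h1 [-> -> -> [hd hw hI]]]]]]]]]]]]
  := R3 (ltnSE f2) (ltnSE g1) hN.
exists (e + e1)%N, (wf + f1)%N, (wg + g1')%N, (wh + h1)%N; split.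
- by rewrite -{1}[e]addn0 !degfD hd.
- by move: hw; rewrite /W; lia.
- by have := Imove e wf wg wh hI; rewrite !addn0.
Qed.

Lemma reduce e f g h : exists e' f' g' h',
  [/\ stdf f' g' h', degf e f g h = degf e' f' g' h' & I (P e f g h - P e' f' g' h')].
Proof.
move: {2}(W f g h) (leqnn (W f g h)) => n.
elim: n e f g h => [|n IH] e f g h hw.
  case hs0: (stdf f g h).
    by exists e, f, g, h; split => //; rewrite subrr; apply: I0.
  have [e2 [f2 [g2 [h2 [_ hw2 _]]]]] := step e (negbT hs0).
  lia.
case hs0: (stdf f g h).
  by exists e, f, g, h; split => //; rewrite subrr; apply: I0.
have [e2 [f2 [g2 [h2 [hd hw2 hI]]]]] := step e (negbT hs0).
have [e' [f' [g' [h' [hs' hd' hI']]]]] := IH e2 f2 g2 h2 (ltnSE (leq_trans hw2 hw)).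
exists e', f', g', h'; split => //; first by rewrite hd.
by rewrite -(subrK (P e2 f2 g2 h2) (P e f g h)) -addrA; apply: ID.
Qed.
End Reduce.

Definition i0 : 'I_4 := inord 0.
Definition i1 : 'I_4 := inord 1.
Definition i2 : 'I_4 := inord 2.
Definition i3 : 'I_4 := inord 3.

Definition mon (e f g h : nat) : 'X_{1..4} :=
  [multinom (nth 0%N [:: e; f; g; h] i) | i < 4].

Lemma XP (m : 'X_{1..4}) : 'X_[m] = P (m i0) (m i1) (m i2) (m i3) :> {mpoly k[4]}.
Proof.
have e0 : i0 = ord0 by apply: val_inj; rewrite /= vi.
have e1 : i1 = lift ord0 ord0 by apply: val_inj; rewrite /= vi.
have e2 : i2 = lift ord0 (lift ord0 ord0) by apply: val_inj; rewrite /= vi.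
have e3 : i3 = lift ord0 (lift ord0 (lift ord0 ord0)) by apply: val_inj; rewrite /= vi.
rewrite mpolyXE_id !big_ord_recl big_ord0 mulr1 /P /x1 /x2 /x3 /x4 -/i0 -/i1 -/i2 -/i3 !mulrA.
by rewrite e0 e1 e2 e3.
Qed.

Lemma monE e f g h : [/\ mon e f g h i0 = e, mon e f g h i1 = f,
   mon e f g h i2 = g & mon e f g h i3 = h].
Proof. by rewrite /mon !mnmE /i0 /i1 /i2 /i3 !vi. Qed.

Lemma PX e f g h : P e f g h = 'X_[mon e f g h].
Proof. by rewrite XP; case: (monE e f g h) => -> -> -> ->. Qed.

Lemma mon_eta (m : 'X_{1..4}) : m = mon (m i0) (m i1) (m i2) (m i3).
Proof.
apply/mnmP => i; rewrite /mon mnmE.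
case: i => [[|[|[|[|i]]]] Hi] //=; congr (m _); apply: val_inj; by rewrite /= vi.
Qed.

Definition degm (m : 'X_{1..4}) := degf (m i0) (m i1) (m i2) (m i3).
Definition stdm (m : 'X_{1..4}) := stdf (m i1) (m i2) (m i3).

Lemma cmXm m : curve_map a d ('X_[m] : {mpoly k[4]}) = 'X^(degm m).
Proof. by rewrite XP cmP. Qed.

Hypothesis cop : coprime a d.
Hypothesis a_gt0 : (0 < a)%N.

Lemma std_inj e f g h e' f' g' h' : stdf f g h -> stdf f' g' h' ->
  degf e f g h = degf e' f' g' h' -> [/\ e = e', f = f', g = g' & h = h'].
Proof.
rewrite /stdf => /and3P [hf hg hN] /and3P [hf' hg' hN'] hd.
have key : forall E F G K E' F' G' K', (F + 3 * G + 6 * K <= F' + 3 * G' + 6 * K')%N ->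
   (F' + 3 * G' + 6 * K' < a)%N ->
   degf E F G K = degf E' F' G' K' -> (F + 3 * G + 6 * K = F' + 3 * G' + 6 * K')%N.
  move=> E F G K E' F' G' K' hle hlt hd0.
  have eq1 : (d * ((F' + 3 * G' + 6 * K') - (F + 3 * G + 6 * K)) =
      a * ((E + 2 * F + 3 * G + 4 * K) - (E' + 2 * F' + 3 * G' + 4 * K')))%N.
    move: hd0; rewrite /degf; nia.
  have : (a %| (F' + 3 * G' + 6 * K') - (F + 3 * G + 6 * K))%N.
    by rewrite -(Gauss_dvdr _ cop) eq1 dvdn_mulr.
  case: (ltnP 0 ((F' + 3 * G' + 6 * K') - (F + 3 * G + 6 * K))) => hp; last by lia.
  move=> /dvdn_leq => /(_ hp); lia.
have hNN : (f + 3 * g + 6 * h = f' + 3 * g' + 6 * h')%N.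
  case: (leqP (f + 3 * g + 6 * h) (f' + 3 * g' + 6 * h')) => hle.
    exact: key hle hN' hd.
  by apply/esym; apply: (key _ _ _ _ e) (ltnW hle) hN (esym hd).
move: hd; have [-> -> ->] : [/\ f = f', g = g' & h = h'] by split; lia.
rewrite /degf => hd; split => //.
have : (e * a = e' * a)%N by lia.
by move/eqP; rewrite eqn_mul2r eqn0Ngt a_gt0 /= => /eqP.
Qed.

Lemma mmap1E (m : 'X_{1..4}) :
  mmap1 (fun i => 'X^(curve_exp a d i)) m = 'X^(degm m) :> {poly k}.
Proof. by rewrite -cmXm /curve_map mmapX. Qed.

Lemma stdm_mon e f g h : stdm (mon e f g h) = stdf f g h.
Proof. by rewrite /stdm; case: (monE e f g h) => _ -> -> ->. Qed.

Lemma degm_inj m m' : stdm m -> stdm m' -> degm m = degm m' -> m = m'.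
Proof.
move=> hm hm' hd; rewrite (mon_eta m) (mon_eta m').
by case: (std_inj hm hm' hd) => -> -> -> ->.
Qed.

Lemma lemA (q : {mpoly k[4]}) : (forall s, s \in msupp q -> stdm s) ->
  curve_map a d q = 0 -> q = 0.
Proof.
move=> hstd hq; apply: msuppnil0.
case E: (msupp q) => [|s r] //; exfalso.
have sin : s \in msupp q by rewrite E mem_head.
have : (curve_map a d q)`_(degm s) = q@_s.
  rewrite /curve_map /mmap coef_sum (bigD1_seq s) ?msupp_uniq //=.
  rewrite mmap1E coefCM coefXn eqxx mulr1 big_seq_cond big1 ?addr0 // => m /andP [hmin hm].
  rewrite mmap1E coefCM coefXn.
  case: eqP => [hdeg|]; last by rewrite mulr0.
  by move: hm; rewrite (degm_inj (hstd _ sin) (hstd _ hmin) hdeg) eqxx.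
rewrite hq coef0 => /esym /eqP hz.
by move: sin; rewrite mcoeff_msupp hz.
Qed.

Lemma gen_main (hs : seq {mpoly k[4]}) :
  (forall j, (j < size hs)%N -> curve_map a d hs`_j = 0) ->
  in_ideal hs (P 0 3 0 0 - P 3 0 1 0) ->
  in_ideal hs (P 0 0 2 0 - P 2 0 0 1) ->
  (forall f g h, (f <= 2)%N -> (g <= 1)%N -> (a <= f + 3 * g + 6 * h)%N ->
  exists wf wg wh f0 g0 h0 e1 f1 g1 h1,
    [/\ f = (wf + f0)%N, g = (wg + g0)%N, h = (wh + h0)%N &
      [/\ degf 0 f0 g0 h0 = degf e1 f1 g1 h1,
        (W f1 g1 h1 < W f0 g0 h0)%N & in_ideal hs (P 0 f0 g0 h0 - P e1 f1 g1 h1)]]) ->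
  generates hs (@p4 k a d).
Proof.
move=> hk R1 R2 R3 p; split; first exact: I_kernel.
move=> hp.
have main : forall r : seq 'X_{1..4}, exists q, (forall s, s \in msupp q -> stdm s) /\
   in_ideal hs (\sum_(m <- r) p@_m *: 'X_[m] - q).
  elim => [|m r [q [hq hI]]].
    exists 0; split.
      have -> : msupp (0 : {mpoly k[4]}) = [::] by apply/eqP; rewrite msupp_eq0.
      by [].
    by rewrite big_nil subrr; apply: I0.
  have [e' [f' [g' [h' [hst hd hI2]]]]] := reduce a_gt0 R1 R2 R3 (m i0) (m i1) (m i2) (m i3).
  exists (p@_m *: 'X_[mon e' f' g' h'] + q); split.
    move=> s /msuppD_le; rewrite mem_cat => /orP [/msuppZ_le|/hq //].
    by rewrite msuppX mem_seq1 => /eqP ->; rewrite stdm_mon.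
  rewrite big_cons opprD addrACA -scalerBr; apply: ID => //; apply: IZ.
  by rewrite XP -PX.
have [q [hq hI]] := main (msupp p).
rewrite -mpolyE in hI.
have hq0 : q = 0.
  apply: lemA => //.
  have := I_kernel hk hI; rewrite cmB hp => /eqP; rewrite sub0r oppr_eq0 => /eqP.
  by [].
by move: hI; rewrite hq0 subr0.
Qed.

Lemma coefMP (r : {mpoly k[4]}) e f g h e' f' g' h' :
  ~~ [&& (e <= e')%N, (f <= f')%N, (g <= g')%N & (h <= h')%N] ->
  (r * P e f g h)@_(mon e' f' g' h') = 0.
Proof.
move=> hn; apply/eqP; apply: contraR hn; rewrite -mcoeff_msupp PX.
rewrite (perm_mem (msuppMX _ _)) => /mapP [m' _ hm].
have := congr1 (fun m : 'X_{1..4} => (m i0, m i1, m i2, m i3)) hm.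
rewrite /= !mnmDE.
case: (monE e f g h) => [-> -> -> ->]; case: (monE e' f' g' h') => [-> -> -> ->].
by case=> -> -> -> ->; rewrite !leq_addr.
Qed.

Lemma coefMB (r : {mpoly k[4]}) e f g h e2 f2 g2 h2 e' f' g' h' :
  ~~ [&& (e <= e')%N, (f <= f')%N, (g <= g')%N & (h <= h')%N] ->
  ~~ [&& (e2 <= e')%N, (f2 <= f')%N, (g2 <= g')%N & (h2 <= h')%N] ->
  (r * (P e f g h - P e2 f2 g2 h2))@_(mon e' f' g' h') = 0.
Proof.
by move=> hA hB; rewrite mulrBr mcoeffB !coefMP // subrr.
Qed.

Lemma phi_ideal (hs : seq {mpoly k[4]}) v p :
  (forall j r, (j < size hs)%N -> (r * hs`_j)@_v = 0) ->
  in_ideal hs p -> p@_v = 0.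
Proof.
move=> hz [c [_ ->]]; rewrite raddf_sum /= big1 // => i _.
exact: hz.
Qed.

Lemma coefPP e f g h e' f' g' h' : (P e f g h)@_(mon e' f' g' h') =
  ((mon e f g h == mon e' f' g' h')%:R).
Proof. by rewrite PX mcoeffX. Qed.

Lemma mon_neq e f g h e' f' g' h' :
  ~~ [&& e == e', f == f', g == g' & h == h'] -> mon e f g h != mon e' f' g' h'.
Proof.
apply: contra => /eqP hm.
have := congr1 (fun m : 'X_{1..4} => (m i0, m i1, m i2, m i3)) hm.
case: (monE e f g h) => [-> -> -> ->]; case: (monE e' f' g' h') => [-> -> -> ->].
by case=> -> -> -> ->; rewrite !eqxx.
Qed.

Lemma not_gen (hs : seq {mpoly k[4]}) e f g h e' f' g' h' :
  (degf e f g h = degf e' f' g' h') ->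
  ~~ [&& e == e', f == f', g == g' & h == h'] ->
  (forall j r, (j < size hs)%N -> (r * hs`_j)@_(mon e' f' g' h') = 0) ->
  ~ generates hs (@p4 k a d).
Proof.
move=> hd hne hz hg.
have hp : p4 a d (P e f g h - P e' f' g' h') by rewrite /p4 cmB !cmP hd subrr.
have := phi_ideal hz ((hg _).2 hp).
rewrite mcoeffB !coefPP eqxx (negbTE (mon_neq hne)) sub0r => /eqP.
by rewrite oppr_eq0 oner_eq0.
Qed.

Lemma Pker e f g h e' f' g' h' : degf e f g h = degf e' f' g' h' ->
  curve_map a d (P e f g h - P e' f' g' h') = 0.
Proof. by move=> hd; rewrite cmB !cmP hd subrr. Qed.

Lemma IgenN (hs : seq {mpoly k[4]}) j e f g h e' f' g' h' : (j < size hs)%N ->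
  hs`_j = P e f g h - P e' f' g' h' -> in_ideal hs (P e' f' g' h' - P e f g h).
Proof. by move=> hj he; rewrite -opprB -he; apply/IN/Igen. Qed.

Ltac mintac := move=> [|[|[|[|[|?]]]]] r //= _; apply: coefMB;
  apply/negP => /and4P [? ? ? ?]; lia.
Ltac kertac ha := move=> [|[|[|[|[|?]]]]] //= _; apply: Pker; rewrite /degf ha; nia.

Lemma case0 m : (0 < d)%N -> (1 <= m)%N -> a = (6 * m)%N ->
  minimally_generates [:: P 0 0 2 0 - P 2 0 0 1; P 0 3 0 0 - P 3 0 1 0;
     P (4 * m + d) 0 0 0 - P 0 0 0 m] (@p4 k a d).
Proof.
move=> hd hm ha; split.
  apply: gen_main; first (by kertac ha); first exact: (Igen (j := 1)).
    exact: (Igen (j := 0)).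
  move=> f g h hf hg; rewrite ha => hN.
  exists f, g, (h - m)%N, 0%N, 0%N, m, (4 * m + d)%N, 0%N, 0%N, 0%N.
  split; try lia; split; first (by rewrite /degf ha; nia); first (by rewrite /W; lia).
  by apply: (IgenN (j := 2)).
move=> [|[|[|i]]] //= _.
- apply: (not_gen (e := 2) (f := 0) (g := 0) (h := 1) (e' := 0) (f' := 0) (g' := 2) (h' := 0));
    [by rewrite /degf; lia| by [] | mintac].
- apply: (not_gen (e := 3) (f := 0) (g := 1) (h := 0) (e' := 0) (f' := 3) (g' := 0) (h' := 0));
    [by rewrite /degf; lia| by [] | mintac].
- apply: (not_gen (e := 4 * m + d) (f := 0) (g := 0) (h := 0) (e' := 0) (f' := 0) (g' := 0) (h' := m));
    [by rewrite /degf ha; nia| by apply/negP => /and4P [/eqP ? ? ? ?]; lia | mintac].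
Qed.

Ltac neqtac := apply/negP => /and4P [/eqP ? /eqP ? /eqP ? /eqP ?]; lia.
Ltac g12tac ha := first [
  apply: (not_gen (e := 2) (f := 0) (g := 0) (h := 1) (e' := 0) (f' := 0) (g' := 2) (h' := 0));
    [by rewrite /degf; lia| by [] | mintac] |
  apply: (not_gen (e := 3) (f := 0) (g := 1) (h := 0) (e' := 0) (f' := 3) (g' := 0) (h' := 0));
    [by rewrite /degf; lia| by [] | mintac] ].

Lemma case1s : d = 1%N -> a = 7%N ->
  minimally_generates [:: P 0 0 2 0 - P 2 0 0 1; P 0 3 0 0 - P 3 0 1 0;
     P 7 0 0 0 - P 0 1 0 1; P 4 2 0 0 - P 0 0 1 1; P 2 2 1 0 - P 0 0 0 2] (@p4 k a d).
Proof.
move=> hd ha; split.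
  apply: gen_main; first (by move=> [|[|[|[|[|?]]]]] //= _; apply: Pker; rewrite /degf ha hd);
    first exact: (Igen (j := 1)).
    exact: (Igen (j := 0)).
  move=> f g h hf hg; rewrite ha => hN.
  case: (leqP 2 h) => hh.
    exists f, g, (h - 2)%N, 0%N, 0%N, 2%N, 2%N, 2%N, 1%N, 0%N.
    split; try lia; split; first (by rewrite /degf ha hd); first (by rewrite /W; lia).
    by apply: (IgenN (j := 4)).
  case: (leqP 1 g) => hg1.
    exists f, 0%N, (h - 1)%N, 0%N, 1%N, 1%N, 4%N, 2%N, 0%N, 0%N.
    split; try lia; split; first (by rewrite /degf ha hd); first (by rewrite /W; lia).
    by apply: (IgenN (j := 3)).
  exists (f - 1)%N, g, (h - 1)%N, 1%N, 0%N, 1%N, 7%N, 0%N, 0%N, 0%N.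
  split; try lia; split; first (by rewrite /degf ha hd); first (by rewrite /W; lia).
  by apply: (IgenN (j := 2)).
move=> [|[|[|[|[|i]]]]] //= _; try g12tac ha.
- apply: (not_gen (e := 7) (f := 0) (g := 0) (h := 0) (e' := 0) (f' := 1) (g' := 0) (h' := 1));
    [by rewrite /degf ha hd| by [] | mintac].
- apply: (not_gen (e := 4) (f := 2) (g := 0) (h := 0) (e' := 0) (f' := 0) (g' := 1) (h' := 1));
    [by rewrite /degf ha hd| by [] | mintac].
- apply: (not_gen (e := 2) (f := 2) (g := 1) (h := 0) (e' := 0) (f' := 0) (g' := 0) (h' := 2));
    [by rewrite /degf ha hd| by [] | mintac].
Qed.

Lemma case1g m n1 n2 : (0 < d)%N -> (1 <= m)%N -> a = (6 * m + 1)%N ->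
  (n1 + 6 = 4 * m + d)%N -> (n2 + 1 = 4 * m + d)%N ->
  minimally_generates [:: P 0 0 2 0 - P 2 0 0 1; P 0 3 0 0 - P 3 0 1 0;
     P n1 5 0 0 - P 0 0 0 m.+1; P n2 2 0 0 - P 0 0 1 m;
     P (4 * m + d + 2) 0 0 0 - P 0 1 0 m] (@p4 k a d).
Proof.
move=> hd hm ha hn1 hn2; split.
  apply: gen_main; first (by kertac ha); first exact: (Igen (j := 1)).
    exact: (Igen (j := 0)).
  move=> f g h hf hg; rewrite ha => hN.
  case: (leqP m.+1 h) => hh.
    exists f, g, (h - m.+1)%N, 0%N, 0%N, m.+1, n1, 5%N, 0%N, 0%N.
    split; try lia; split; first (by rewrite /degf ha; nia); first (by rewrite /W; lia).
    by apply: (IgenN (j := 2)).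
  case: (leqP 1 g) => hg1.
    exists f, 0%N, (h - m)%N, 0%N, 1%N, m, n2, 2%N, 0%N, 0%N.
    split; try lia; split; first (by rewrite /degf ha; nia); first (by rewrite /W; lia).
    by apply: (IgenN (j := 3)).
  exists (f - 1)%N, g, (h - m)%N, 1%N, 0%N, m, (4 * m + d + 2)%N, 0%N, 0%N, 0%N.
  split; try lia; split; first (by rewrite /degf ha; nia); first (by rewrite /W; lia).
  by apply: (IgenN (j := 4)).
move=> [|[|[|[|[|i]]]]] //= _; try g12tac ha.
- apply: (not_gen (e := n1) (f := 5) (g := 0) (h := 0) (e' := 0) (f' := 0) (g' := 0) (h' := m.+1));
    [by rewrite /degf ha; nia| neqtac | mintac].
- apply: (not_gen (e := n2) (f := 2) (g := 0) (h := 0) (e' := 0) (f' := 0) (g' := 1) (h' := m));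
    [by rewrite /degf ha; nia| neqtac | mintac].
- apply: (not_gen (e := 4 * m + d + 2) (f := 0) (g := 0) (h := 0) (e' := 0) (f' := 1) (g' := 0) (h' := m));
    [by rewrite /degf ha; nia| neqtac | mintac].
Qed.

Lemma case2 m n1 : (0 < d)%N -> (1 <= m)%N -> a = (6 * m + 2)%N ->
  (n1 + 4 = 4 * m + d)%N ->
  minimally_generates [:: P 0 0 2 0 - P 2 0 0 1; P 0 3 0 0 - P 3 0 1 0;
     P n1 4 0 0 - P 0 0 0 m.+1; P (4 * m + d + 1) 1 0 0 - P 0 0 1 m;
     P (4 * m + d + 4) 0 0 0 - P 0 2 0 m] (@p4 k a d).
Proof.
move=> hd hm ha hn1; split.
  apply: gen_main; first (by kertac ha); first exact: (Igen (j := 1)).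
    exact: (Igen (j := 0)).
  move=> f g h hf hg; rewrite ha => hN.
  case: (leqP m.+1 h) => hh.
    exists f, g, (h - m.+1)%N, 0%N, 0%N, m.+1, n1, 4%N, 0%N, 0%N.
    split; try lia; split; first (by rewrite /degf ha; nia); first (by rewrite /W; lia).
    by apply: (IgenN (j := 2)).
  case: (leqP 1 g) => hg1.
    exists f, 0%N, (h - m)%N, 0%N, 1%N, m, (4 * m + d + 1)%N, 1%N, 0%N, 0%N.
    split; try lia; split; first (by rewrite /degf ha; nia); first (by rewrite /W; lia).
    by apply: (IgenN (j := 3)).
  exists (f - 2)%N, g, (h - m)%N, 2%N, 0%N, m, (4 * m + d + 4)%N, 0%N, 0%N, 0%N.
  split; try lia; split; first (by rewrite /degf ha; nia); first (by rewrite /W; lia).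
  by apply: (IgenN (j := 4)).
move=> [|[|[|[|[|i]]]]] //= _; try g12tac ha.
- apply: (not_gen (e := n1) (f := 4) (g := 0) (h := 0) (e' := 0) (f' := 0) (g' := 0) (h' := m.+1));
    [by rewrite /degf ha; nia| neqtac | mintac].
- apply: (not_gen (e := 4 * m + d + 1) (f := 1) (g := 0) (h := 0) (e' := 0) (f' := 0) (g' := 1) (h' := m));
    [by rewrite /degf ha; nia| neqtac | mintac].
- apply: (not_gen (e := 4 * m + d + 4) (f := 0) (g := 0) (h := 0) (e' := 0) (f' := 2) (g' := 0) (h' := m));
    [by rewrite /degf ha; nia| neqtac | mintac].
Qed.

Lemma case3 m n1 : (0 < d)%N -> (1 <= m)%N -> a = (6 * m + 3)%N ->
  (n1 + 2 = 4 * m + d)%N ->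
  minimally_generates [:: P 0 0 2 0 - P 2 0 0 1; P 0 3 0 0 - P 3 0 1 0;
     P n1 3 0 0 - P 0 0 0 m.+1; P (4 * m + d + 3) 0 0 0 - P 0 0 1 m] (@p4 k a d).
Proof.
move=> hd hm ha hn1; split.
  apply: gen_main; first (by kertac ha); first exact: (Igen (j := 1)).
    exact: (Igen (j := 0)).
  move=> f g h hf hg; rewrite ha => hN.
  case: (leqP m.+1 h) => hh.
    exists f, g, (h - m.+1)%N, 0%N, 0%N, m.+1, n1, 3%N, 0%N, 0%N.
    split; try lia; split; first (by rewrite /degf ha; nia); first (by rewrite /W; lia).
    by apply: (IgenN (j := 2)).
  exists f, (g - 1)%N, (h - m)%N, 0%N, 1%N, m, (4 * m + d + 3)%N, 0%N, 0%N, 0%N.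
  split; try lia; split; first (by rewrite /degf ha; nia); first (by rewrite /W; lia).
  by apply: (IgenN (j := 3)).
move=> [|[|[|[|[|i]]]]] //= _; try g12tac ha.
- apply: (not_gen (e := n1) (f := 3) (g := 0) (h := 0) (e' := 0) (f' := 0) (g' := 0) (h' := m.+1));
    [by rewrite /degf ha; nia| neqtac | mintac].
- apply: (not_gen (e := 4 * m + d + 3) (f := 0) (g := 0) (h := 0) (e' := 0) (f' := 0) (g' := 1) (h' := m));
    [by rewrite /degf ha; nia| neqtac | mintac].
Qed.

Lemma case4 m : (0 < d)%N -> (1 <= m)%N -> a = (6 * m + 4)%N ->
  minimally_generates [:: P 0 0 2 0 - P 2 0 0 1; P 0 3 0 0 - P 3 0 1 0;
     P (4 * m + d) 2 0 0 - P 0 0 0 m.+1; P (4 * m + d + 5) 0 0 0 - P 0 1 1 m] (@p4 k a d).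
Proof.
move=> hd hm ha; split.
  apply: gen_main; first (by kertac ha); first exact: (Igen (j := 1)).
    exact: (Igen (j := 0)).
  move=> f g h hf hg; rewrite ha => hN.
  case: (leqP m.+1 h) => hh.
    exists f, g, (h - m.+1)%N, 0%N, 0%N, m.+1, (4 * m + d)%N, 2%N, 0%N, 0%N.
    split; try lia; split; first (by rewrite /degf ha; nia); first (by rewrite /W; lia).
    by apply: (IgenN (j := 2)).
  exists (f - 1)%N, (g - 1)%N, (h - m)%N, 1%N, 1%N, m, (4 * m + d + 5)%N, 0%N, 0%N, 0%N.
  split; try lia; split; first (by rewrite /degf ha; nia); first (by rewrite /W; lia).
  by apply: (IgenN (j := 3)).
move=> [|[|[|[|[|i]]]]] //= _; try g12tac ha.
- apply: (not_gen (e := 4 * m + d) (f := 2) (g := 0) (h := 0) (e' := 0) (f' := 0) (g' := 0) (h' := m.+1));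
    [by rewrite /degf ha; nia| neqtac | mintac].
- apply: (not_gen (e := 4 * m + d + 5) (f := 0) (g := 0) (h := 0) (e' := 0) (f' := 1) (g' := 1) (h' := m));
    [by rewrite /degf ha; nia| neqtac | mintac].
Qed.

Lemma case5 m : (0 < d)%N -> (1 <= m)%N -> a = (6 * m + 5)%N ->
  minimally_generates [:: P 0 0 2 0 - P 2 0 0 1; P 0 3 0 0 - P 3 0 1 0;
     P (4 * m + d + 2) 1 0 0 - P 0 0 0 m.+1; P (4 * m + d + 7) 0 0 0 - P 0 2 1 m] (@p4 k a d).
Proof.
move=> hd hm ha; split.
  apply: gen_main; first (by kertac ha); first exact: (Igen (j := 1)).
    exact: (Igen (j := 0)).
  move=> f g h hf hg; rewrite ha => hN.
  case: (leqP m.+1 h) => hh.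
    exists f, g, (h - m.+1)%N, 0%N, 0%N, m.+1, (4 * m + d + 2)%N, 1%N, 0%N, 0%N.
    split; try lia; split; first (by rewrite /degf ha; nia); first (by rewrite /W; lia).
    by apply: (IgenN (j := 2)).
  exists (f - 2)%N, (g - 1)%N, (h - m)%N, 2%N, 1%N, m, (4 * m + d + 7)%N, 0%N, 0%N, 0%N.
  split; try lia; split; first (by rewrite /degf ha; nia); first (by rewrite /W; lia).
  by apply: (IgenN (j := 3)).
move=> [|[|[|[|[|i]]]]] //= _; try g12tac ha.
- apply: (not_gen (e := 4 * m + d + 2) (f := 1) (g := 0) (h := 0) (e' := 0) (f' := 0) (g' := 0) (h' := m.+1));
    [by rewrite /degf ha; nia| neqtac | mintac].
- apply: (not_gen (e := 4 * m + d + 7) (f := 0) (g := 0) (h := 0) (e' := 0) (f' := 2) (g' := 1) (h' := m));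
    [by rewrite /degf ha; nia| neqtac | mintac].
Qed.
End S.

Section Forms.
Variable k : fieldType.
Variables m d : nat.
Ltac ftac := rewrite /H /P /= !expr0 !mulr1 !mul1r ?expr1.

Lemma H0 : H k m d 0 = [:: P k 0 0 2 0 - P k 2 0 0 1; P k 0 3 0 0 - P k 3 0 1 0;
     P k (4 * m + d) 0 0 0 - P k 0 0 0 m].
Proof. by ftac. Qed.

Lemma H1s : H k 1 1 1 = [:: P k 0 0 2 0 - P k 2 0 0 1; P k 0 3 0 0 - P k 3 0 1 0;
     P k 7 0 0 0 - P k 0 1 0 1; P k 4 2 0 0 - P k 0 0 1 1; P k 2 2 1 0 - P k 0 0 0 2].
Proof. by ftac. Qed.

Lemma H1g : ~~ ((m == 1%N) && (d == 1%N)) ->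
  H k m d 1 = [:: P k 0 0 2 0 - P k 2 0 0 1; P k 0 3 0 0 - P k 3 0 1 0;
     P k (4 * m + d - 6) 5 0 0 - P k 0 0 0 m.+1; P k (4 * m + d - 1) 2 0 0 - P k 0 0 1 m;
     P k (4 * m + d + 2) 0 0 0 - P k 0 1 0 m].
Proof. by move=> hb; rewrite /H (negbTE hb) /P /= !expr0 !mulr1 !mul1r ?expr1. Qed.

Lemma H2 : H k m d 2 = [:: P k 0 0 2 0 - P k 2 0 0 1; P k 0 3 0 0 - P k 3 0 1 0;
     P k (4 * m + d - 4) 4 0 0 - P k 0 0 0 m.+1; P k (4 * m + d + 1) 1 0 0 - P k 0 0 1 m;
     P k (4 * m + d + 4) 0 0 0 - P k 0 2 0 m].
Proof. by ftac. Qed.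

Lemma H3 : H k m d 3 = [:: P k 0 0 2 0 - P k 2 0 0 1; P k 0 3 0 0 - P k 3 0 1 0;
     P k (4 * m + d - 2) 3 0 0 - P k 0 0 0 m.+1; P k (4 * m + d + 3) 0 0 0 - P k 0 0 1 m].
Proof. by ftac. Qed.

Lemma H4 : H k m d 4 = [:: P k 0 0 2 0 - P k 2 0 0 1; P k 0 3 0 0 - P k 3 0 1 0;
     P k (4 * m + d) 2 0 0 - P k 0 0 0 m.+1; P k (4 * m + d + 5) 0 0 0 - P k 0 1 1 m].
Proof. by ftac. Qed.

Lemma H5 : H k m d 5 = [:: P k 0 0 2 0 - P k 2 0 0 1; P k 0 3 0 0 - P k 3 0 1 0;
     P k (4 * m + d + 2) 1 0 0 - P k 0 0 0 m.+1; P k (4 * m + d + 7) 0 0 0 - P k 0 2 1 m].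
Proof. by ftac. Qed.
End Forms.


Theorem theorem4p3 (k : fieldType) (a d : nat) :
  (0 < d)%N -> (7 <= a)%N -> coprime a d ->
  minimally_generates (@H k (a %/ 6) d (a %% 6)) (@p4 k a d).
Proof.
move=> hd ha7 cop.
have a0 : (0 < a)%N by lia.
have := divn_eq a 6; have := ltn_pmod a (isT : (0 < 6)%N).
move: (a %/ 6)%N (a %% 6)%N => m q hq ha.
have hm : (1 <= m)%N by lia.
case: q ha hq => [|[|[|[|[|[|q]]]]]] ha hq //.
- by rewrite H0; apply: case0 => //; lia.
- case: (boolP ((m == 1%N) && (d == 1%N))) => [/andP [/eqP hm1 /eqP hd1]|hb].
    by subst m d; rewrite H1s; apply: case1s => //; lia.
  have h6 : (6 <= 4 * m + d)%N.
    case: (leqP 2 m) => hm2; first lia.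
    have m1 : m = 1%N by lia.
    move: hb; rewrite m1 /= => hb.
    have : d != 1%N by [].
    lia.
  rewrite H1g //; apply: (@case1g k a d cop a0 m (4 * m + d - 6)%N (4 * m + d - 1)%N) => //; lia.
- by rewrite H2; apply: (@case2 k a d cop a0 m (4 * m + d - 4)%N) => //; lia.
- by rewrite H3; apply: (@case3 k a d cop a0 m (4 * m + d - 2)%N) => //; lia.
- by rewrite H4; apply: case4 => //; lia.
- by rewrite H5; apply: case5 => //; lia.
Qed.
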